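(* Let $K$ be a field, $n,\ell\ge1$, $B=\{u_1,\dots,u_\ell\}\subseteq K^n$ with $u_i\ne u_j$ for $i\ne j$, and $\alpha\in K^\ell$. Regard $K[z]=K[z_1,\dots,z_n]$ as a module over itself. Then \[ \sigma(N_{B,\alpha})=\{f\in K[z]: |S_{\alpha_{f,B}}|\le1\},\qquad \tau(N_{B,\alpha})=\{f\in K[z]: \alpha_{f,B}\in\Omega_\ell\}. \]
   Context: For $\beta=(\beta_1,\dots,\beta_\ell)\in K^\ell$, $S_\beta=\{i:\beta_i\ne0\}$, and $\Omega_\ell$ is the set of $\beta\in K^\ell$ such that $\sum_{i\in C}\beta_i\ne0$ for every nonempty $C\subseteq S_\beta$ (so $0\in\Omega_\ell$). For $f\in K[z]$, $\alpha_{f,B}=(\alpha_1f(u_1),\dots,\alpha_\ell f(u_\ell))$. $N_{B,\alpha}=\{f\in K[z]: \sum_{i=1}^\ell\alpha_if(u_i)=0\}$. For a $K$-subspace $N$ of $K[z]$ and $g\in K[z]$, $(N:g)=\{h\in K[z]: hg\in N\}$. A $K$-subspace $J$ of $K[z]$ is a Mathieu subspace if whenever $a^m\in J$ for all $m\ge1$, then for every $b\in K[z]$ we have $ba^m\in J$ for all sufficiently large $m$. $\sigma(N)$ is the set of $g\in K[z]$ with $(N:g)$ an ideal, and $\tau(N)$ the set of $g$ with $(N:g)$ a Mathieu subspace of $K[z]$ (for the commutative algebra $K[z]$ all choices left/right/pre-two-sided/two-sided coincide). *)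

(* Defs.v *)
From HB Require Import structures.
From mathcomp Require Import all_boot all_order all_algebra.
Set Implicit Arguments. Unset Strict Implicit. Unset Printing Implicit Defensive.
Import Order.TTheory GRing.Theory Num.Theory.
Local Open Scope ring_scope.

(* K[z_1,...,z_n], realised as the iterated polynomial ring
   K[z_1,...,z_{n-1}][z_n]; the outermost variable is z_n. *)
Fixpoint mpoly (K : fieldType) (n : nat) : comNzRingType :=
  match n with
  | 0 => K
  | n'.+1 => {poly mpoly K n'}
  end.

Fixpoint mconst (K : fieldType) (n : nat) : K -> mpoly K n :=
  match n return K -> mpoly K n with
  | 0 => fun c => c
  | n'.+1 => fun c => (@mconst K n' c)%:P
  end.

Fixpoint meval (K : fieldType) (n : nat) : mpoly K n -> ('I_n -> K) -> K :=
  match n return mpoly K n -> ('I_n -> K) -> K with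
  | 0 => fun p _ => p
  | n'.+1 => fun p u =>
      meval (p.[@mconst K n' (u ord_max)])
            (fun i : 'I_n' => u (widen_ord (leqnSn n') i))
  end.

Definition is_Ksubspace (K : fieldType) (n : nat) (J : mpoly K n -> Prop) :=
  [/\ J 0,
      (forall x y, J x -> J y -> J (x + y)) &
      (forall (c : K) x, J x -> J (@mconst K n c * x))].

Definition is_ideal (K : fieldType) (n : nat) (J : mpoly K n -> Prop) :=
  [/\ J 0,
      (forall x y, J x -> J y -> J (x + y)) &
      (forall r x, J x -> J (r * x))].

Definition is_Mathieu (K : fieldType) (n : nat) (J : mpoly K n -> Prop) :=
  is_Ksubspace J /\
  forall a : mpoly K n, (forall m : nat, (1 <= m)%N -> J (a ^+ m)) ->
    forall b : mpoly K n, exists M : nat, forall m : nat, (M <= m)%N -> J (b * a ^+ m).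

Definition colon (K : fieldType) (n : nat) (N : mpoly K n -> Prop) (g : mpoly K n)
  : mpoly K n -> Prop := fun h => N (h * g).

Definition sigma_set (K : fieldType) (n : nat) (N : mpoly K n -> Prop) : mpoly K n -> Prop :=
  fun g => is_ideal (colon N g).

Definition tau_set (K : fieldType) (n : nat) (N : mpoly K n -> Prop) : mpoly K n -> Prop :=
  fun g => is_Mathieu (colon N g).

(* N_{B,alpha}, with B = {u_1..u_l} given by u : 'I_l -> K^n *)
Definition N_Balpha (K : fieldType) (n l : nat) (u : 'I_l -> 'I_n -> K) (alpha : 'I_l -> K)
  : mpoly K n -> Prop :=
  fun f => \sum_(i < l) alpha i * meval f (u i) = 0.

Definition alpha_fB (K : fieldType) (n l : nat) (u : 'I_l -> 'I_n -> K) (alpha : 'I_l -> K)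
  (f : mpoly K n) : 'I_l -> K := fun i => alpha i * meval f (u i).

Definition supp (K : fieldType) (l : nat) (beta : 'I_l -> K) : {set 'I_l} :=
  [set i | beta i != 0].

Definition Omega (K : fieldType) (l : nat) (beta : 'I_l -> K) : Prop :=
  forall C : {set 'I_l}, C != set0 -> C \subset supp beta -> \sum_(i in C) beta i != 0.

(* Main.v *)
Require Import Defs.
From HB Require Import structures.
From mathcomp Require Import all_boot all_order all_algebra.
From Stdlib Require Import FunctionalExtensionality.
Set Implicit Arguments. Unset Strict Implicit. Unset Printing Implicit Defensive.
Import Order.TTheory GRing.Theory Num.Theory.
Local Open Scope ring_scope.

Lemma mevalD (K : fieldType) n (p q : mpoly K n) u : meval (p+q) u = meval p u + meval q u.
Proof. elim: n p q u => [//|n IH] p q u /=. by rewrite hornerD IH. Qed.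
Lemma mevalM (K : fieldType) n (p q : mpoly K n) u : meval (p*q) u = meval p u * meval q u.
Proof. elim: n p q u => [//|n IH] p q u /=. by rewrite hornerM IH. Qed.
Lemma mevalC (K : fieldType) n (c : K) u : meval (mconst n c) u = c.
Proof. elim: n u => [//|n IH] u /=. by rewrite hornerC IH. Qed.
Lemma meval1 (K : fieldType) n u : meval (1 : mpoly K n) u = 1.
Proof. elim: n u => [//|n IH] u /=. by rewrite hornerC IH. Qed.
Lemma meval0 (K : fieldType) n u : meval (0 : mpoly K n) u = 0.
Proof. elim: n u => [//|n IH] u /=. by rewrite hornerC IH. Qed.
Lemma mevalX (K : fieldType) n (p : mpoly K n) u m : meval (p ^+ m) u = meval p u ^+ m.
Proof. elim: m => [|m IH]; first by rewrite !expr0 meval1. by rewrite !exprS mevalM IH. Qed.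
Lemma mevalB (K : fieldType) n (p q : mpoly K n) u : meval (p-q) u = meval p u - meval q u.
Proof. elim: n p q u => [//|n IH] p q u /=. by rewrite hornerD hornerN IH. Qed.
Lemma meval_sum (K : fieldType) n (I : finType) (F : I -> mpoly K n) u :
  meval (\sum_i F i) u = \sum_i meval (F i) u.
Proof. apply: (big_morph (fun p => meval p u)); [exact: (fun p q => mevalD p q u) | exact: meval0]. Qed.

Lemma msep (K : fieldType) n (u v : 'I_n -> K) k :
  u k != v k -> exists p : mpoly K n, meval p u != meval p v.
Proof.
elim: n u v k => [|n IH] u v k; first by case: k.
move=> H; case: (eqVneq (u ord_max) (v ord_max)) => Hm; last first.
  by exists ('X : {poly mpoly K n}) => /=; rewrite !hornerX !mevalC.
case: (ltnP k n) => hk; last first.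
  have Ek : k = ord_max by apply: val_inj; apply/eqP; rewrite /= eqn_leq hk -ltnS ltn_ord.
  by rewrite Ek Hm eqxx in H.
have Ew : widen_ord (leqnSn n) (Ordinal hk) = k by apply: val_inj.
have H' : u (widen_ord (leqnSn n) (Ordinal hk)) != v (widen_ord (leqnSn n) (Ordinal hk)) by rewrite Ew.
have [p hp] := IH (fun i => u (widen_ord (leqnSn n) i)) (fun i => v (widen_ord (leqnSn n) i)) (Ordinal hk) H'.
by exists (p%:P : {poly mpoly K n}) => /=; rewrite !hornerC.
Qed.

Lemma mbasis (K : fieldType) n l (u : 'I_l -> 'I_n -> K) (hu : injective u) i :
  exists e : mpoly K n, meval e (u i) = 1 /\ forall k, k != i -> meval e (u k) = 0.
Proof.
suff H: forall s : seq 'I_l, exists e : mpoly K n,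
    meval e (u i) = 1 /\ forall k, k \in s -> k != i -> meval e (u k) = 0.
  have [e [e1 e0]] := H (enum 'I_l).
  by exists e; split=> // k; apply: e0; rewrite mem_enum.
elim=> [|k s [e [He1 He0]]]; first by exists 1; split=> //; rewrite meval1.
case: (eqVneq k i) => [->|hki].
  exists e; split=> // k'; rewrite in_cons => /orP[/eqP->|]; first by rewrite eqxx.
  exact: He0.
case: (pickP (fun j => u i j != u k j)) => [j hj|hall]; last first.
  have: u i = u k by apply: functional_extensionality => j; apply/eqP; move: (hall j) => /negbFE.
  by move/hu => E; rewrite E eqxx in hki.
have [p hp] := msep hj.
set d := meval p (u i) - meval p (u k).
have hd : d != 0 by rewrite subr_eq0.
exists (e * (mconst n (d^-1) * (p - mconst n (meval p (u k))))); split.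
  by rewrite !mevalM mevalB !mevalC He1 mul1r mulVf.
move=> k'; rewrite in_cons => /orP[/eqP->|hk' hk'i].
  by rewrite !mevalM mevalB !mevalC subrr !mulr0.
by rewrite !mevalM He0 // mul0r.
Qed.

Lemma minterp (K : fieldType) n l (u : 'I_l -> 'I_n -> K) (hu : injective u) (c : 'I_l -> K) :
  exists h : mpoly K n, forall i, meval h (u i) = c i.
Proof.
suff H: forall s : seq 'I_l, exists h : mpoly K n, forall i, i \in s -> meval h (u i) = c i.
  have [h hh] := H (enum 'I_l).
  by exists h => i; apply: hh; rewrite mem_enum.
elim=> [|i s [h Hh]]; first by exists 0.
have [e [e1 e0]] := mbasis hu i.
exists (h + mconst n (c i - meval h (u i)) * e) => k; rewrite in_cons.
case: (eqVneq k i) => [->|hki] /=.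
  by rewrite mevalD mevalM mevalC e1 mulr1 addrC subrK.
by move=> hk; rewrite mevalD mevalM e0 // mulr0 addr0 Hh.
Qed.

Lemma colonE (K : fieldType) n l (u : 'I_l -> 'I_n -> K) alpha g h :
  colon (N_Balpha u alpha) g h = (\sum_i alpha_fB u alpha g i * meval h (u i) = 0).
Proof.
have E : \sum_i alpha i * meval (h*g) (u i) = \sum_i alpha_fB u alpha g i * meval h (u i).
  by apply: eq_bigr => i _; rewrite mevalM /alpha_fB mulrCA mulrC.
by rewrite /colon /N_Balpha E.
Qed.

Lemma sum_ind (K : fieldType) l (F : 'I_l -> K) i : \sum_k F k * (k == i)%:R = F i.
Proof.
rewrite (bigD1 i) //= eqxx mulr1 big1 ?addr0 // => k /negbTE ->; by rewrite mulr0.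
Qed.

Lemma sigma_part (K : fieldType) (n l : nat) (hl : (1 <= l)%N)
  (u : 'I_l -> 'I_n -> K) (hu : injective u) (alpha : 'I_l -> K) (f : mpoly K n) :
  sigma_set (N_Balpha u alpha) f <-> (#|supp (alpha_fB u alpha f)| <= 1)%N.
Proof.
set b := alpha_fB u alpha f.
rewrite /sigma_set; split.
  move=> [J0 JD JM]; rewrite leqNgt; apply/negP => /card_gt1P [i [j [hi hj hij]]].
  rewrite inE in hi; rewrite inE in hj.
  have [h hh] := minterp hu (fun k => b j * (k == i)%:R - b i * (k == j)%:R).
  have [r hr] := minterp hu (fun k => (k == i)%:R).
  have Jh : colon (N_Balpha u alpha) f h.
    rewrite colonE -/b (bigD1 i) //= (bigD1 j) /=; last by rewrite eq_sym hij.
    rewrite big1 => [|k /andP [hkj hki]]; last by rewrite hh (negbTE hkj) (negbTE hki) !mulr0 subrr mulr0.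
    by rewrite !hh !eqxx (negbTE hij) eq_sym (negbTE hij) !mulr1 !mulr0 subr0 sub0r addr0 mulrN mulrC subrr.
  have := JM r h Jh; rewrite colonE -/b (bigD1 i) //= big1 => [|k hk]; last first.
    by rewrite mevalM hr (negbTE hk) mul0r mulr0.
  by rewrite addr0 mevalM hr hh eqxx (negbTE hij) mul1r mulr1 mulr0 subr0; apply/eqP; rewrite mulf_neq0.
move=> hS.
have [i0 hi0] : exists i0, forall k, k != i0 -> b k = 0.
  case: (set_0Vmem (supp b)) => [S0 | [i0 Hi0]].
    exists (Ordinal hl) => k _; have: k \notin supp b by rewrite S0 inE.
    by rewrite inE negbK => /eqP.
  exists i0 => k hk; apply/eqP; apply: contraT => hbk.
  have : [set k; i0] \subset supp b.
    apply/subsetP => x; rewrite !inE => /orP[] /eqP ->; [exact: hbk | by rewrite inE in Hi0].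
  by move/subset_leq_card; rewrite cards2 hk => /leq_trans /(_ hS).
have hsing : forall y : 'I_l -> K, \sum_k b k * y k = b i0 * y i0.
  move=> y; rewrite (bigD1 i0) //= big1 ?addr0 // => k hk; by rewrite hi0 // mul0r.
split.
- by rewrite colonE -/b hsing meval0 mulr0.
- by move=> x y; rewrite !colonE -/b !hsing mevalD mulrDr => -> ->; rewrite addr0.
- by move=> r x; rewrite !colonE -/b !hsing mevalM mulrCA => ->; rewrite mulr0.
Qed.

Lemma tau_part (K : fieldType) (n l : nat)
  (u : 'I_l -> 'I_n -> K) (hu : injective u) (alpha : 'I_l -> K) (f : mpoly K n) :
  tau_set (N_Balpha u alpha) f <-> Omega (alpha_fB u alpha f).
Proof.
set b := alpha_fB u alpha f.
rewrite /tau_set /is_Mathieu; split.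
  move=> [_ HM] C HC0 HCS; apply/eqP => Hs.
  have [i0 Hi0] := set0Pn _ HC0.
  have [a ha] := minterp hu (fun k => (k \in C)%:R).
  have [bb hb] := minterp hu (fun k => (k == i0)%:R).
  have Ha : forall m, (1 <= m)%N -> colon (N_Balpha u alpha) f (a ^+ m).
    move=> m hm; rewrite colonE -/b -{}[X in _ = X]Hs big_mkcond [RHS]big_mkcond; apply: eq_bigr => k _.
    rewrite mevalX ha; case: (k \in C); first by rewrite expr1n mulr1.
    by rewrite expr0n eqn0Ngt hm mulr0.
  have [M HM'] := HM a Ha bb.
  have := HM' M (leqnn M); rewrite colonE -/b (bigD1 i0) //= big1 => [|k hk]; last first.
    by rewrite mevalM hb (negbTE hk) mul0r mulr0.
  rewrite addr0 mevalM mevalX hb ha eqxx Hi0 expr1n !mulr1 => /eqP hb0.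
  by move: ((subsetP HCS) i0 Hi0); rewrite inE hb0.
move=> HO.
have colonE' : forall h, colon (N_Balpha u alpha) f h = (\sum_i b i * meval h (u i) = 0).
  by move=> h; rewrite colonE.
split; first split.
- by rewrite colonE' big1 // => i _; rewrite meval0 mulr0.
- move=> x y; rewrite !colonE' => hx hy; under eq_bigr do rewrite mevalD mulrDr; by rewrite big_split /= hx hy addr0.
- move=> c x; rewrite !colonE' => hx; under eq_bigr do rewrite mevalM mevalC mulrCA; by rewrite -mulr_sumr hx mulr0.
move=> a Ha bb; exists 1%N => m hm; rewrite colonE' big1 // => k _.
set A := fun j => meval a (u j).
suff hz : b k != 0 -> A k = 0.
  case: (eqVneq (b k) 0) => [->|hk]; first by rewrite mul0r.
  by rewrite mevalM mevalX -/(A k) hz // expr0n eqn0Ngt hm !mulr0.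
move=> hk; apply: contraTeq isT => hc.
set c := A k.
set C := [set j | (b j != 0) && (A j == c)].
have := HO C; rewrite (_ : C != set0); last by apply/set0Pn; exists k; rewrite inE hk eqxx.
rewrite (_ : C \subset supp b); last by apply/subsetP => x; rewrite !inE => /andP [].
move=> /(_ isT isT) /eqP Hne; exfalso; apply: Hne.
have E1 : \sum_(i in C) b i = \sum_j b j * (A j == c)%:R.
  rewrite big_mkcond; apply: eq_bigr => j _; rewrite inE.
  case: (eqVneq (b j) 0) => [->|hj] /=; first by rewrite mul0r; case: (A j == c); rewrite ?mulr0.
  by case: (A j == c); rewrite ?mulr1 ?mulr0.
rewrite E1.
set q : {poly K} := (\prod_(j | A j != c) ('X - (A j)%:P)) * 'X.
have hq : forall x, q.[x] = (\prod_(j | A j != c) (x - A j)) * x.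
  by move=> x; rewrite /q hornerM horner_prod hornerX; under eq_bigr do rewrite hornerXsubC.
have hqA : forall j, q.[A j] = (A j == c)%:R * q.[c].
  move=> j; case: (eqVneq (A j) c) => [->|hjc]; first by rewrite mul1r.
  by rewrite hq (bigD1 j) //= subrr !mul0r.
have hqc : q.[c] != 0.
  rewrite hq mulf_neq0 //; apply/prodf_neq0 => j hj; by rewrite subr_eq0 eq_sym.
have hsum : \sum_j b j * q.[A j] = 0.
  under eq_bigr do rewrite horner_coef mulr_sumr.
  rewrite exchange_big /= big1 // => i _.
  case: (eqVneq (i : nat) 0%N) => [hi0|hi0].
    by rewrite big1 // => j _; rewrite /q coefMX hi0 eqxx mul0r mulr0.
  have := Ha i; rewrite lt0n hi0 colonE' => /(_ isT) Hi.
  under eq_bigr do rewrite mulrCA; rewrite -mulr_sumr.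
  by under eq_bigr do rewrite -mevalX; rewrite Hi mulr0.
have : \sum_j b j * q.[A j] = q.[c] * \sum_j b j * (A j == c)%:R.
  by rewrite mulr_sumr; apply: eq_bigr => j _; rewrite hqA mulrA mulrC.
rewrite hsum => /esym /eqP; rewrite mulf_eq0 (negbTE hqc) /= => /eqP.
done.
Qed.

Theorem proposition6p3 (K : fieldType) (n l : nat) (hn : (1 <= n)%N) (hl : (1 <= l)%N)
  (u : 'I_l -> 'I_n -> K) (hu : injective u) (alpha : 'I_l -> K) :
  (forall f : mpoly K n,
     sigma_set (N_Balpha u alpha) f <-> (#|supp (alpha_fB u alpha f)| <= 1)%N) /\
  (forall f : mpoly K n,
     tau_set (N_Balpha u alpha) f <-> Omega (alpha_fB u alpha f)).
Proof. split=> f; [exact: sigma_part | exact: tau_part]. Qed.
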